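(* Let $A,B\in\widehat\Xi_d$ and write $[B]*[A]=\sum_{C\in\widehat\Xi_d}Q^C_{B,A}[C]$ in $\widehat{\mathbb S}_d$. Suppose $B=\sum_{j=1}^n(\beta_jE^{j,j}+\alpha_jE^{j,j+1})$ or $B=\sum_{j=1}^n(\beta_jE^{j,j}+\alpha_jE^{j+1,j})$ for some $\alpha_j,\beta_j\in\mathbb Z_{\ge0}$. If $Q^C_{B,A}\neq0$, then $\varepsilon_i(C)=\varepsilon_i(A)+\varepsilon_i(B)$ for all $i\in\mathbb Z$.
   Context: Fix $n\ge1$, $d\ge0$, $\mathbb A=\mathbb Z[v,v^{-1}]$. $\widehat\Xi_d$ is the set of $\mathbb Z\times\mathbb Z$ matrices $A=(a_{ij})$ with $a_{ij}\in\mathbb Z_{\ge0}$, $a_{i+n,j+n}=a_{ij}$ and $\sum_{1\le i\le n,\,j\in\mathbb Z}a_{ij}=d$. $E^{i,j}$ is the $\mathbb Z\times\mathbb Z$ matrix with $(k,l)$-entry $1$ if $(k,l)=(i+pn,j+pn)$ for some $p\in\mathbb Z$ and $0$ otherwise. $\widehat{\mathbb S}_d$ is the generic affine $v$-Schur algebra: the free $\mathbb A$-algebra with basis $\{e_A\}_{A\in\widehat\Xi_d}$ whose structure constants specialize at $v=\sqrt q$ to those of the convolution algebra of $GL_d(\mathbb F_q((\varepsilon)))$-invariant functions on pairs of periodic lattice chains (of period $n$) with respect to characteristic functions of orbits, orbits being indexed by $\widehat\Xi_d$ via $a_{ij}=\dim\frac{\mathbf L_i\cap\mathbf L'_j}{\mathbf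 L_{i-1}\cap\mathbf L'_j+\mathbf L_i\cap\mathbf L'_{j-1}}$. The standard basis is $[A]=v^{-d_A}e_A$ with $d_A=\sum_{1\le i\le n,\ i\ge k,\ j<l}a_{ij}a_{kl}$. For $i\in\mathbb Z$, $\varepsilon_i(A)=\sum_{r\le i<s}a_{rs}-\sum_{r>i\ge s}a_{rs}$. *)

(* Defs.v *)
From HB Require Import structures.
From mathcomp Require Import all_boot all_order all_algebra all_field.
Set Implicit Arguments. Unset Strict Implicit. Unset Printing Implicit Defensive.
Import Order.TTheory GRing.Theory Num.Theory.
Local Open Scope ring_scope.

Definition zmat := int -> int -> nat.

Definition win (W : nat) : seq int :=
  [seq (a%:Z - W%:Z) | a <- iota 0 (2 * W).+1].

(* A \in \hat\Xi_d : n-periodic and sum_{1<=i<=n, j in Z} a_ij = d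
   (the infinite sum is expressed as the eventually constant value of
   the sums over growing windows) *)
Definition inXi (n d : nat) (A : zmat) : Prop :=
  (forall i j : int, A (i + n%:Z) (j + n%:Z) = A i j) /\
  exists W0 : nat, forall W : nat, (W0 <= W)%N ->
    (\sum_(i <- [seq (a.+1)%:Z | a <- iota 0 n]) \sum_(j <- win W) A i j)%N = d.

Definition dA_rel (n : nat) (A : zmat) (x : nat) : Prop :=
  exists W0 : nat, forall W : nat, (W0 <= W)%N ->
    (\sum_(i <- [seq (a.+1)%:Z | a <- iota 0 n])
       \sum_(k <- win W) \sum_(j <- win W) \sum_(l <- win W)
          (if ((k <= i)%R && (j < l)%R) then A i j * A k l else 0))%N = x.

Definition eps_rel (A : zmat) (i : int) (x : int) : Prop :=
  exists W0 : nat, forall W : nat, (W0 <= W)%N ->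
    \sum_(r <- win W) \sum_(s <- win W)
       ((if (r <= i) && (i < s) then (A r s)%:Z else 0)
        - (if (i < r) && (s <= i) then (A r s)%:Z else 0)) = x.

(* index j in {1..n} of the residue class of r, shifted to {0..n-1} *)
Definition resid (n : nat) (r : int) : nat := `|((r - 1) %% n%:Z)%Z|%N.

(* B = sum_{j=1}^n (beta_j E^{j,j} + alpha_j E^{j,j+1});
   alpha_j, beta_j are alpha (j-1), beta (j-1) *)
Definition Bupper (n : nat) (alpha beta : nat -> nat) : zmat :=
  fun r s => if s == r then beta (resid n r)
             else if s == r + 1 then alpha (resid n r) else 0%N.

Definition Blower (n : nat) (alpha beta : nat -> nat) : zmat :=
  fun r s => if s == r then beta (resid n r)
             else if r == s + 1 then alpha (resid n s) else 0%N.

(* Lattices in K^d, K = F((eps)).  We identify K^d with F-valued       *)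
(* functions on Z: index k = a + d*m (0 <= a < d) carries the          *)
(* coefficient of eps^m in the a-th coordinate; eps acts as the shift  *)
(* k |-> k + d.  An O-lattice is an F-subspace stable under eps that   *)
(* contains {x | x k = 0 for k < M} and is contained in                *)
(* {x | x k = 0 for k < -M} for some M.                                *)
Section Lattices.
Variable F : fieldType.

Definition vec := int -> F.
Definition subsp := vec -> Prop.

Definition epsv (d : nat) (x : vec) : vec := fun k => x (k - d%:Z).

Definition tail (M : int) : subsp := fun x => forall k, k < M -> x k = 0.

Definition is_subspace (L : subsp) : Prop :=
  L (fun _ => 0) /\
  (forall x y, L x -> L y -> L (fun k => x k + y k)) /\
  (forall (c : F) x, L x -> L (fun k => c * x k)).

Definition lattice (d : nat) (L : subsp) : Prop :=
  is_subspace L /\ (forall x, L x -> L (epsv d x)) /\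
  exists M : int, (forall x, tail M x -> L x) /\ (forall x, L x -> tail (- M) x).

Definition capS (X Y : subsp) : subsp := fun x => X x /\ Y x.
Definition addS (X Y : subsp) : subsp :=
  fun x => exists y z, X y /\ Y z /\ forall k, x k = y k + z k.

Definition lincomb (m : nat) (c : 'I_m -> F) (v : 'I_m -> vec) : vec :=
  fun k => \sum_(t < m) c t * v t k.

Definition qdim (X Y : subsp) (m : nat) : Prop :=
  exists v : 'I_m -> vec,
    (forall t, X (v t)) /\
    (forall c : 'I_m -> F, Y (lincomb c v) -> forall t, c t = 0) /\
    (forall x, X x -> exists c : 'I_m -> F, Y (fun k => x k - lincomb c v k)).

Definition chain := int -> subsp.

Definition is_chain (n d : nat) (L : chain) : Prop :=
  (forall i, lattice d (L i)) /\
  (forall i x, L (i - 1) x -> L i x) /\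
  (forall i x, L (i + n%:Z) x <-> L i (epsv d x)).

Definition relpos (L L' : chain) (A : zmat) : Prop :=
  forall i j : int,
    qdim (capS (L i) (L' j))
         (addS (capS (L (i - 1)) (L' j)) (capS (L i) (L' (j - 1)))) (A i j).

Definition same_chain (L L' : chain) : Prop := forall i x, L i x <-> L' i x.

Definition has_card (S : chain -> Prop) (m : nat) : Prop :=
  exists f : 'I_m -> chain,
    (forall t, S (f t)) /\
    (forall t u, same_chain (f t) (f u) -> t = u) /\
    (forall L, S L -> exists t, same_chain L (f t)).

End Lattices.

(* Structure constants of the generic affine v-Schur algebra.          *)
(* An element of Z[v,v^-1] is written v^-k p(v) with p : {poly int}.   *)
(* (p,k) is the coefficient Q^C_{B,A} of [C] in [B]*[A] iff for every   *)
(* finite field F with q elements its value at v = sqrt q equals       *)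
(* sqrt q^(d_C - d_B - d_A) times the convolution structure constant,  *)
(* i.e. the number of chains L' with (L,L') in O_B, (L',L'') in O_A,   *)
(* for any (L,L'') in O_C.                                             *)
Definition laurent_eval (p : {poly int}) (k : nat) (z : algC) : algC :=
  (map_poly (fun c : int => c%:~R) p).[z] / z ^+ k.

Definition is_schur_coeff (n d : nat) (B A C : zmat) (p : {poly int}) (k : nat)
  : Prop :=
  forall (F : finFieldType) (L L'' : chain F),
    is_chain n d L -> is_chain n d L'' -> relpos L L'' C ->
    exists m : nat,
      has_card (fun L' => is_chain n d L' /\ relpos L L' B /\ relpos L' L'' A) m /\
      forall dA dB dC : nat, dA_rel n A dA -> dA_rel n B dB -> dA_rel n C dC ->
        laurent_eval p k (sqrtC (#|F|%:R)) =
          (sqrtC (#|F|%:R)) ^ (dC%:Z - dB%:Z - dA%:Z) * m%:R.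

(* Main.v *)
Require Import Defs.
From HB Require Import structures.
From mathcomp Require Import all_boot all_order all_algebra all_field.
From Stdlib Require Import FunctionalExtensionality ClassicalEpsilon Classical.
From mathcomp Require Import zify ring.
From Stdlib Require Import Lia.
Set Implicit Arguments. Unset Strict Implicit. Unset Printing Implicit Defensive.
Import Order.TTheory GRing.Theory Num.Theory.
Local Open Scope ring_scope.

Section LA.
Variable F : fieldType.
Implicit Types X Y Z : subsp F.

Definition sub X Y := forall x, X x -> Y x.
Definition seqv X Y := forall x, X x <-> Y x.

Lemma sp_ext X x y : X x -> (forall k, x k = y k) -> X y.
Proof. by move=> Hx H; have <- : x = y by apply: functional_extensionality. Qed.

Lemma sp0 X : is_subspace X -> X (fun _ => 0).
Proof. by case. Qed.
Lemma spD X x y : is_subspace X -> X x -> X y -> X (fun k => x k + y k).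
Proof. by case=> _ [H _]; apply: H. Qed.
Lemma spZ X c x : is_subspace X -> X x -> X (fun k => c * x k).
Proof. by case=> _ [_ H]; apply: H. Qed.
Lemma spN X x : is_subspace X -> X x -> X (fun k => - x k).
Proof. by move=> S Hx; apply: sp_ext (spZ (-1) S Hx) _ => k; rewrite mulN1r. Qed.
Lemma spB X x y : is_subspace X -> X x -> X y -> X (fun k => x k - y k).
Proof. by move=> S Hx Hy; apply: spD => //; apply: spN. Qed.

Lemma lincomb_recr m (c : 'I_m.+1 -> F) v k :
  lincomb c v k = lincomb (fun t => c (widen_ord (leqnSn m) t))
                          (fun t => v (widen_ord (leqnSn m) t)) k
                  + c ord_max * v ord_max k.
Proof. by rewrite /lincomb big_ord_recr. Qed.

Lemma lincomb0v m (v : 'I_m -> vec F) k : lincomb (fun _ => 0) v k = 0.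
Proof. by rewrite /lincomb big1 // => t _; rewrite mul0r. Qed.
Lemma lincombI0 (c : 'I_0 -> F) v k : lincomb c v k = 0.
Proof. by rewrite /lincomb big_ord0. Qed.
Lemma lincombD m (c1 c2 : 'I_m -> F) v k :
  lincomb (fun t => c1 t + c2 t) v k = lincomb c1 v k + lincomb c2 v k.
Proof. by rewrite /lincomb -big_split; apply: eq_bigr => t _; rewrite mulrDl. Qed.
Lemma lincombZ m a (c : 'I_m -> F) v k :
  lincomb (fun t => a * c t) v k = a * lincomb c v k.
Proof. by rewrite /lincomb mulr_sumr; apply: eq_bigr => t _; rewrite mulrA. Qed.
Lemma lincombN m (c : 'I_m -> F) v k :
  lincomb (fun t => - c t) v k = - lincomb c v k.
Proof. by rewrite /lincomb -sumrN; apply: eq_bigr => t _; rewrite mulNr. Qed.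
Lemma lincombB m (c1 c2 : 'I_m -> F) v k :
  lincomb (fun t => c1 t - c2 t) v k = lincomb c1 v k - lincomb c2 v k.
Proof. by rewrite lincombD lincombN. Qed.
Lemma lincomb_ext m (c1 c2 : 'I_m -> F) v k :
  (forall t, c1 t = c2 t) -> lincomb c1 v k = lincomb c2 v k.
Proof. by move=> H; apply: eq_bigr => t _; rewrite H. Qed.

Lemma sp_lincomb X m (c : 'I_m -> F) v :
  is_subspace X -> (forall t, X (v t)) -> X (lincomb c v).
Proof.
move=> S; elim: m c v => [|m IH] c v Hv.
  by apply: sp_ext (sp0 S) _ => k; rewrite lincombI0.
apply: sp_ext (spD S (IH _ _ (fun t => Hv _)) (spZ (c ord_max) S (Hv ord_max))) _.
by move=> k; rewrite lincomb_recr.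
Qed.

Lemma cap_sp X Y : is_subspace X -> is_subspace Y -> is_subspace (capS X Y).
Proof.
move=> SX SY; split; first by split; apply: sp0.
split; first by move=> x y [? ?] [? ?]; split; apply: spD.
by move=> c x [? ?]; split; apply: spZ.
Qed.

Lemma add_sp X Y : is_subspace X -> is_subspace Y -> is_subspace (addS X Y).
Proof.
move=> SX SY; split.
  by exists (fun _ => 0), (fun _ => 0); do 2?split; try apply: sp0 => //; move=> k; rewrite addr0.
split.
  move=> x y [y1 [z1 [H1 [H2 H3]]]] [y2 [z2 [H4 [H5 H6]]]].
  exists (fun k => y1 k + y2 k), (fun k => z1 k + z2 k); split; first exact: spD.
  split; first exact: spD.
  by move=> k; rewrite H3 H6 addrACA.
move=> c x [y1 [z1 [H1 [H2 H3]]]].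
exists (fun k => c * y1 k), (fun k => c * z1 k); split; first exact: spZ.
split; first exact: spZ.
by move=> k; rewrite H3 mulrDr.
Qed.

Lemma qdim_ext X X' Y Y' m :
  seqv X X' -> seqv Y Y' -> qdim X Y m -> qdim X' Y' m.
Proof.
move=> EX EY [v [H1 [H2 H3]]]; exists v; split; first by move=> t; apply/EX.
split; first by move=> c /EY; apply: H2.
by move=> x /EX /H3 [c Hc]; exists c; apply/EY.
Qed.

Lemma qdim0 X Y : is_subspace Y -> sub X Y -> qdim X Y 0.
Proof.
move=> SY H; exists (fun _ => fun _ => 0); split; first by case.
split; first by move=> c _; case.
move=> x /H Hx; exists (fun _ => 0); apply: sp_ext Hx _ => k.
by rewrite lincombI0 subr0.
Qed.

Lemma qdim0_sub X Y : qdim X Y 0 -> sub X Y.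
Proof.
move=> [v [_ [_ H]]] x /H [c Hc]; apply: sp_ext Hc _ => k.
by rewrite lincombI0 subr0.
Qed.

Lemma qdim_le X Y a b : is_subspace Y -> qdim X Y a -> qdim X Y b -> (b <= a)%N.
Proof.
move=> SY [v [HvX [Hvi Hvs]]] [w [HwX [Hwi Hws]]].
have Hc : forall t, {c : 'I_a -> F | Y (fun k => w t k - lincomb c v k)}.
  by move=> t; apply: constructive_indefinite_description; apply: Hvs; apply: HwX.
pose cc t := proj1_sig (Hc t).
pose M := \matrix_(t < b, s < a) cc t s.
have : row_free M.
  apply: inj_row_free => u Hu; apply/rowP => t; rewrite mxE.
  pose y t := fun k => w t k - lincomb (cc t) v k.
  have Yy : Y (lincomb (fun t => u 0 t) y).
    by apply: sp_lincomb => // t'; rewrite /y /cc; case: (Hc t').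
  move: t; apply: Hwi; apply: sp_ext Yy _ => k.
  rewrite /lincomb /y.
  have -> : \sum_(t < b) u 0 t * (w t k - \sum_(t0 < a) cc t t0 * v t0 k) =
            \sum_(t < b) u 0 t * w t k -
            \sum_(t0 < a) (\sum_(t < b) u 0 t * cc t t0) * v t0 k.
    have -> : \sum_(t0 < a) (\sum_(t < b) u 0 t * cc t t0) * v t0 k =
              \sum_(t < b) u 0 t * \sum_(t0 < a) cc t t0 * v t0 k.
      under eq_bigr do rewrite mulr_suml.
      rewrite exchange_big; apply: eq_bigr => t _; rewrite mulr_sumr.
      by apply: eq_bigr => s _; rewrite mulrA.
    by rewrite -sumrB; apply: eq_bigr => t _; rewrite mulrBr.
  rewrite [X in _ - X]big1 ?subr0 // => s _.
  have H := Hu; move/matrixP: H => /(_ 0 s); rewrite !mxE => H.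
  have -> : \sum_(t < b) u 0 t * cc t s = 0 by rewrite -[RHS]H; apply: eq_bigr => t _; rewrite mxE.
  by rewrite mul0r.
by rewrite /row_free => /eqP <-; apply: rank_leq_col.
Qed.

Lemma qdim_unique X Y a b : is_subspace Y -> qdim X Y a -> qdim X Y b -> a = b.
Proof.
by move=> S Ha Hb; apply/eqP; rewrite eqn_leq (qdim_le S Ha Hb) (qdim_le S Hb Ha).
Qed.

End LA.

Section LA2.
Variable F : fieldType.
Implicit Types X Y Z : subsp F.

Definition catv a b (v : 'I_a -> vec F) (w : 'I_b -> vec F) : 'I_(a + b) -> vec F :=
  fun t => match split t with inl t1 => v t1 | inr t2 => w t2 end.
Definition catc a b (v : 'I_a -> F) (w : 'I_b -> F) : 'I_(a + b) -> F :=
  fun t => match split t with inl t1 => v t1 | inr t2 => w t2 end.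

Lemma lincomb_cat a b (c : 'I_(a + b) -> F) v w k :
  lincomb c (catv v w) k =
  lincomb (fun t => c (lshift b t)) v k + lincomb (fun t => c (rshift a t)) w k.
Proof.
rewrite /lincomb big_split_ord /catv /=; congr (_ + _); apply: eq_bigr => t _.
  by rewrite (unsplitK (inl t)).
by rewrite (unsplitK (inr t)).
Qed.

Lemma qdim_trans X Y Z a b : is_subspace Y -> is_subspace Z -> sub Z Y -> sub Y X ->
  qdim X Y a -> qdim Y Z b -> qdim X Z (a + b).
Proof.
move=> SY SZ ZY YX [v [HvX [Hvi Hvs]]] [w [HwY [Hwi Hws]]].
exists (catv v w); split.
  by move=> t; rewrite /catv; case: (split t) => t'; [apply: HvX | apply/YX/HwY].
split.
  move=> c Hc.
  have E k := lincomb_cat c v w k.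
  have H1 : forall t, c (lshift b t) = 0.
    apply: Hvi; have := spB SY (ZY _ Hc) (sp_lincomb (fun t => c (rshift a t)) SY HwY).
    by move=> H; apply: sp_ext H _ => k; rewrite E addrK.
  have H2 : forall t, c (rshift a t) = 0.
    apply: Hwi; apply: sp_ext Hc _ => k; rewrite E.
    by rewrite (lincomb_ext _ _ H1) lincomb0v add0r.
  move=> t; rewrite -(splitK t); case: (split t) => t' /=; [exact: H1 | exact: H2].
move=> x /Hvs [c1 Hc1]; have [c2 Hc2] := Hws _ Hc1.
exists (catc c1 c2); apply: sp_ext Hc2 _ => k.
rewrite lincomb_cat /catc.
rewrite (lincomb_ext (c2 := c1) _ _); last by move=> t; rewrite (unsplitK (inl t)).
rewrite (lincomb_ext (c2 := c2) _ _); last by move=> t; rewrite (unsplitK (inr t)).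
by rewrite opprD addrA.
Qed.

Lemma qdim_mod X Y Z a : is_subspace X -> is_subspace Y -> is_subspace Z ->
  sub Y X -> sub (capS X Z) Y -> qdim X Y a -> qdim (addS X Z) (addS Y Z) a.
Proof.
move=> SX SY SZ YX XZY [v [HvX [Hvi Hvs]]].
exists v; split.
  move=> t; exists (v t), (fun _ => 0); split=> //; split; first exact: sp0.
  by move=> k; rewrite addr0.
split.
  move=> c [y [z [Hy [Hz E]]]]; apply: Hvi.
  have Hzx : X z.
    apply: sp_ext (spB SX (sp_lincomb c SX HvX) (YX _ Hy)) _ => k.
    by rewrite E addrC addKr.
  have Yz := XZY _ (conj Hzx Hz).
  by apply: sp_ext (spD SY Hy Yz) _ => k; rewrite E.
move=> x [x1 [z1 [Hx1 [Hz1 E]]]].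
have [c Hc] := Hvs _ Hx1; exists c.
exists (fun k => x1 k - lincomb c v k), z1; split=> //; split=> // k.
by rewrite E addrAC.
Qed.

Definition unitv (j : int) : vec F := fun k => if k == j then 1 else 0.

Lemma lincomb_unit_in m (f : 'I_m -> int) (c : 'I_m -> F) t0 :
  injective f -> lincomb c (fun t => unitv (f t)) (f t0) = c t0.
Proof.
move=> inj; rewrite /lincomb (bigD1 t0) //= /unitv eqxx mulr1 big1 ?addr0 //.
move=> t /negbTE Ht; case: eqP => [/inj E|_]; last by rewrite mulr0.
by rewrite E eqxx in Ht.
Qed.

Lemma lincomb_unit_out m (f : 'I_m -> int) (c : 'I_m -> F) k :
  (forall t, f t != k) -> lincomb c (fun t => unitv (f t)) k = 0.
Proof.
move=> H; rewrite /lincomb big1 // => t _; rewrite /unitv.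
by case: eqP => [E|_]; [have := H t; rewrite E eqxx | rewrite mulr0].
Qed.

Lemma tail_sp M : is_subspace (@tail F M).
Proof.
split; first by [].
split; first by move=> x y Hx Hy k Hk; rewrite Hx // Hy // addr0.
by move=> c x Hx k Hk; rewrite Hx // mulr0.
Qed.

Lemma qdim_tail (M1 M2 : int) : M1 <= M2 -> qdim (@tail F M1) (tail M2) `|M2 - M1|%N.
Proof.
move=> le12.
have E : (`|M2 - M1|%N)%:Z = M2 - M1 by rewrite gez0_abs // subr_ge0.
pose f (t : 'I_`|M2 - M1|%N) : int := M1 + (t : nat)%:Z.
have finj : injective f by move=> t1 t2 /addrI /eqP; rewrite eqz_nat => /eqP /val_inj.
exists (fun t => unitv (f t)); split.
  move=> t k Hk; rewrite /unitv; case: eqP => // Ek.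
  by move: Hk; rewrite Ek /f; lia.
split.
  move=> c Hc t; rewrite -(lincomb_unit_in c t finj); apply: Hc.
  have := ltn_ord t; rewrite /f; lia.
move=> x Hx; exists (fun t => x (f t)) => k Hk.
case: (ltP k M1) => [kM1|M1k].
  rewrite Hx // lincomb_unit_out ?subr0 // => t; apply/eqP => Et.
  by move: kM1; rewrite -Et /f; lia.
have Ht : (`|k - M1| < `|M2 - M1|)%N.
  rewrite -ltz_nat E; lia.
have -> : k = f (Ordinal Ht) by rewrite /f /=; lia.
by rewrite lincomb_unit_in // subrr.
Qed.

End LA2.

Section LA3.
Variable F : fieldType.
Implicit Types X Y Z : subsp F.

Definition extc m (c : 'I_m -> F) : 'I_m.+1 -> F :=
  fun t => odflt 0 (omap c (insub (val t))).

Lemma extc_w m (c : 'I_m -> F) i : extc c (widen_ord (leqnSn m) i) = c i.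
Proof. by rewrite /extc /= (valK i). Qed.
Lemma extc_max m (c : 'I_m -> F) : extc c ord_max = 0.
Proof. by rewrite /extc insubF //= ltnn. Qed.
Lemma lincomb_extc m (c : 'I_m -> F) (v : 'I_m.+1 -> vec F) k :
  lincomb (extc c) v k = lincomb c (fun t => v (widen_ord (leqnSn m) t)) k.
Proof.
rewrite lincomb_recr extc_max mul0r addr0; apply: lincomb_ext => t.
by rewrite extc_w.
Qed.

Definition indep Y m (v : 'I_m -> vec F) :=
  forall c, Y (lincomb c v) -> forall t, c t = 0.

Lemma coef_unique Y m (v : 'I_m -> vec F) z c1 c2 : is_subspace Y -> indep Y v ->
  Y (fun k => z k - lincomb c1 v k) -> Y (fun k => z k - lincomb c2 v k) ->
  forall t, c1 t = c2 t.
Proof.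
move=> SY Hi H1 H2 t; apply/eqP; rewrite eq_sym -subr_eq0; apply/eqP.
move: t; apply: (Hi (fun t => c2 t - c1 t)).
apply: sp_ext (spB SY H1 H2) _ => k; rewrite lincombB.
by rewrite opprB addrC addrA subrK.
Qed.

Lemma qdim_exists_gen m : forall (v : 'I_m -> vec F) Y Z,
  is_subspace Y -> is_subspace Z -> sub Y Z -> indep Y v ->
  (forall z, Z z -> exists c, Y (fun k => z k - lincomb c v k)) ->
  exists a, qdim Z Y a.
Proof.
elim: m => [|m IH] v Y Z SY SZ YZ Hi Hs.
  exists 0%N; apply: qdim0 => // z /Hs [c Hc]; apply: sp_ext Hc _ => k.
  by rewrite lincombI0 subr0.
pose v' := fun t => v (widen_ord (leqnSn m) t).
have Hi' : indep Y v'.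
  move=> c Hc t; rewrite -(extc_w c t); move: (widen_ord _ t); apply: Hi.
  by apply: sp_ext Hc _ => k; rewrite lincomb_extc.
have [[z0 [c0 [Z0 [Y0 N0]]]] | Hno] :=
  classic (exists z0 c0, Z z0 /\ Y (fun k => z0 k - lincomb c0 v k) /\ c0 ord_max != 0).
- pose Z' := fun x => Z x /\ exists c', Y (fun k => x k - lincomb c' v' k).
  have SZ' : is_subspace Z'.
    split.
      split; first exact: sp0.
      by exists (fun _ => 0); apply: sp_ext (sp0 SY) _ => k; rewrite lincomb0v subr0.
    split.
      move=> x y [Zx [c1 H1]] [Zy [c2 H2]]; split; first exact: spD.
      exists (fun t => c1 t + c2 t); apply: sp_ext (spD SY H1 H2) _ => k.
      by rewrite lincombD addrACA opprD.
    move=> a x [Zx [c1 H1]]; split; first exact: spZ.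
    exists (fun t => a * c1 t); apply: sp_ext (spZ a SY H1) _ => k.
    by rewrite lincombZ mulrBr.
  have YZ' : sub Y Z'.
    move=> y Hy; split; first exact: YZ.
    by exists (fun _ => 0); apply: sp_ext Hy _ => k; rewrite lincomb0v subr0.
  have [a Ha] : exists a, qdim Z' Y a.
    by apply: (IH v') => // z [_ H].
  exists (1 + a)%N; apply: (qdim_trans SZ' SY YZ' _ _ Ha); first by move=> x [].
  exists (fun _ => z0); split; first by [].
  split.
    move=> c [_ [c' Hc']] t; rewrite (ord1 t); apply/eqP/negPn/negP => Nc.
    pose e := c ord0.
    have Hy : Y (fun k => z0 k - lincomb (extc (fun t => e^-1 * c' t)) v k).
      apply: sp_ext (spZ e^-1 SY Hc') _ => k.
      rewrite lincomb_extc lincombZ -/v' mulrBr; congr (_ - _).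
      rewrite /lincomb big_ord1 mulrA mulVf ?mul1r //.
    have := coef_unique SY Hi Y0 Hy ord_max; rewrite extc_max.
    by move/eqP: N0.
  move=> x Zx; have [c Hc] := Hs _ Zx.
  pose s := c ord_max / c0 ord_max.
  exists (fun _ => s); split.
    apply: (spB SZ Zx); apply: sp_ext (spZ s SZ Z0) _ => k.
    by rewrite /lincomb big_ord1.
  exists (fun t => c (widen_ord (leqnSn m) t) - s * c0 (widen_ord (leqnSn m) t)).
  apply: sp_ext (spB SY Hc (spZ s SY Y0)) _ => k.
  rewrite /lincomb big_ord1 -/(lincomb c v k) -/(lincomb c0 v k).
  rewrite -/(lincomb (fun t => c (widen_ord (leqnSn m) t) - s * c0 (widen_ord (leqnSn m) t)) v' k).
  rewrite lincombB lincombZ (lincomb_recr c) (lincomb_recr c0) -/v'.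
  have -> : c ord_max = s * c0 ord_max by rewrite /s divfK.
  set A := lincomb _ v' k; set B := lincomb _ v' k.
  rewrite mulrBr mulrDr; ring.
- apply: (IH v') => // z Zz; have [c Hc] := Hs _ Zz.
  have cm : c ord_max = 0.
    apply/eqP/negPn/negP => Nc; apply: Hno; by exists z, c.
  exists (fun t => c (widen_ord (leqnSn m) t)); apply: sp_ext Hc _ => k.
  by rewrite lincomb_recr cm mul0r addr0.
Qed.

Lemma qdim_exists T Z U m : is_subspace T -> is_subspace Z -> sub T Z -> sub Z U ->
  qdim U T m -> exists a, qdim Z T a.
Proof.
move=> ST SZ TZ ZU [v [HvU [Hvi Hvs]]].
by apply: (qdim_exists_gen (v := v)) => // z /ZU /Hvs.
Qed.

End LA3.

Lemma sum_win_restr (R : Type) (idx : R) (op : Monoid.com_law idx) (g : int -> R)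
  (lo : int) (N W : nat) :
  (forall x, (x < lo) || (lo + N%:Z <= x) -> g x = idx) ->
  - (W%:Z) <= lo -> lo + N%:Z <= W%:Z + 1 ->
  \big[op/idx]_(x <- win W) g x = \big[op/idx]_(k < N) g (lo + k%:Z).
Proof.
move=> Hg H1 H2.
set off := absz (lo + W%:Z).
rewrite /win big_map.
have -> : iota 0 (2 * W).+1 = index_iota 0 (2 * W).+1 by rewrite /index_iota subn0.
rewrite (big_cat_nat _ (n := off)) /=; last 2 first.
- by [].
- rewrite /off; lia.
rewrite (big_cat_nat _ (m := off) (n := off + N)) /=; last 2 first.
- by rewrite leq_addr.
- rewrite /off; lia.
rewrite big1_seq; last first.
  move=> a /andP [_]; rewrite mem_index_iota; case/andP=> Hb Ha; apply: Hg; apply/orP; left.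
  move: Ha; rewrite /off; lia.
rewrite [X in op _ (op _ X)]big1_seq; last first.
  move=> a /andP [_]; rewrite mem_index_iota; case/andP=> Ha Hb; apply: Hg; apply/orP; right.
  move: Ha; rewrite /off; lia.
rewrite Monoid.mul1m Monoid.mulm1.
rewrite -{1}[off]add0n big_addn addKn big_mkord; apply: eq_bigr => k _.
congr g; rewrite /off; lia.
Qed.

Lemma win_stable (R : Type) (idx : R) (op : Monoid.com_law idx) (g : int -> R)
  (W0 W : nat) :
  (forall x, (x < - W0%:Z) || (W0%:Z < x) -> g x = idx) -> (W0 <= W)%N ->
  \big[op/idx]_(x <- win W) g x = \big[op/idx]_(x <- win W0) g x.
Proof.
move=> Hg H.
rewrite (@sum_win_restr _ _ op g (- W0%:Z) (2 * W0).+1 W); last 3 first.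
- move=> x /orP [] Hx; apply: Hg; apply/orP; [left => // | right]; lia.
- lia.
- lia.
rewrite (@sum_win_restr _ _ op g (- W0%:Z) (2 * W0).+1 W0) //.
- move=> x /orP [] Hx; apply: Hg; apply/orP; [left => // | right]; lia.
- lia.
Qed.

Section Chains.
Variable F : fieldType.
Implicit Types X Y Z A B : subsp F.
Implicit Types L : chain F.

Lemma addS_sub A Z : is_subspace A -> is_subspace Z -> sub A Z -> seqv (addS A Z) Z.
Proof.
move=> SA SZ AZ x; split.
  by move=> [y [z [Hy [Hz E]]]]; apply: sp_ext (spD SZ (AZ _ Hy) Hz) _ => k; rewrite E.
move=> Hx; exists (fun _ => 0), x; split; first exact: sp0.
by split=> // k; rewrite add0r.
Qed.

Lemma addS_sub2 A Z : is_subspace A -> is_subspace Z -> sub Z A -> seqv (addS A Z) A.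
Proof.
move=> SA SZ ZA x; split.
  by move=> [y [z [Hy [Hz E]]]]; apply: sp_ext (spD SA Hy (ZA _ Hz)) _ => k; rewrite E.
move=> Hx; exists x, (fun _ => 0); split=> //; split; first exact: sp0.
by move=> k; rewrite addr0.
Qed.

Lemma addS_absorb A B Z : is_subspace B -> is_subspace Z -> sub B Z ->
  seqv (addS (addS A B) Z) (addS A Z).
Proof.
move=> SB SZ BZ x; split.
  move=> [y [z [[a [b [Ha [Hb E1]]]] [Hz E]]]].
  exists a, (fun k => b k + z k); split=> //; split; first by apply: spD => //; apply: BZ.
  by move=> k; rewrite E E1 addrA.
move=> [a [z [Ha [Hz E]]]]; exists a, z; split=> //.
by exists a, (fun _ => 0); split=> //; split; [apply: sp0 | move=> k; rewrite addr0].
Qed.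

Lemma addS_mono A A' Z : sub A A' -> sub (addS A Z) (addS A' Z).
Proof. by move=> H x [y [z [Hy [Hz E]]]]; exists y, z; split; [apply: H|]. Qed.

Lemma capS_mono A A' Z Z' : sub A A' -> sub Z Z' -> sub (capS A Z) (capS A' Z').
Proof. by move=> H1 H2 x [Ha Hz]; split; [apply: H1 | apply: H2]. Qed.

Lemma tail_mono (a b : int) : a <= b -> sub (@tail F b) (tail a).
Proof. by move=> le x Hx k Hk; apply: Hx; apply: lt_le_trans le. Qed.

Lemma tele (G : nat -> subsp F) (g : nat -> nat) N :
  (forall k, is_subspace (G k)) -> (forall k, sub (G k) (G k.+1)) ->
  (forall k, (k < N)%N -> qdim (G k.+1) (G k) (g k)) ->
  qdim (G N) (G 0%N) (\sum_(k < N) g k).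
Proof.
move=> SG MG; elim: N => [|N IH] H.
  by rewrite big_ord0; apply: qdim0.
have sub0 : forall j, sub (G 0%N) (G j).
  by elim=> [|j IHj] x Hx //; apply: MG; apply: IHj.
rewrite big_ord_recr /= addnC.
apply: (qdim_trans (SG _) (SG _) (sub0 _) (MG _) (H _ (ltnSn _))).
by apply: IH => k Hk; apply: H; apply: ltnW.
Qed.

Variables n d : nat.
Hypothesis hn : (0 < n)%N.
Hypothesis hd : (0 < d)%N.

Lemma chain_sp L i : is_chain n d L -> is_subspace (L i).
Proof. by case=> H _; case: (H i). Qed.

Lemma chain_mono L i j : is_chain n d L -> i <= j -> sub (L i) (L j).
Proof.
move=> [_ [Hm _]] le.
have H : forall t : nat, sub (L i) (L (i + t%:Z)).
  elim=> [|t IH]; first by rewrite addr0.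
  move=> x /IH Hx; have := Hm (i + t.+1%:Z) x.
  by rewrite (_ : i + t.+1%:Z - 1 = i + t%:Z); [apply | lia].
by have := H (absz (j - i)); rewrite (_ : i + (absz (j - i))%:Z = j) //; lia.
Qed.

Lemma shift_eq (y : vec F) : epsv d (fun k => y (k + d%:Z)) = y.
Proof. by apply: functional_extensionality => k; rewrite /epsv subrK. Qed.

Lemma chain_shrink L N : is_chain n d L -> exists r, sub (L r) (tail N).
Proof.
move=> [Hl [Hm Hp]]; case: (Hl 0) => _ [_ [M [_ HM]]].
have key : forall t : nat, sub (L (- (t%:Z * n%:Z))) (tail (- M + t%:Z * d%:Z)).
  elim=> [|t IH].
    by move=> x; rewrite mul0r oppr0 mul0r addr0; apply: HM.
  move=> y Hy.
  have Hx : L (- (t%:Z * n%:Z)) (fun k => y (k + d%:Z)).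
    have := (Hp (- (t.+1%:Z * n%:Z)) (fun k => y (k + d%:Z))).2.
    rewrite shift_eq => /(_ Hy).
    by rewrite (_ : - (t.+1%:Z * n%:Z) + n%:Z = - (t%:Z * n%:Z)) // intS; ring.
  move=> k Hk; have := IH _ Hx (k - d%:Z); rewrite subrK; apply.
  move: Hk; rewrite intS mulrDl mul1r; lia.
exists (- ((absz (N + M))%:Z * n%:Z)) => x /key Hx.
apply: (tail_mono _ Hx).
have : (1 <= d%:Z) by rewrite lez_nat.
nia.
Qed.

Lemma chain_grow L N : is_chain n d L -> exists s, sub (tail N) (L s).
Proof.
move=> [Hl [Hm Hp]]; case: (Hl 0) => _ [_ [M [HM _]]].
have key : forall t : nat, sub (tail (M - t%:Z * d%:Z)) (L (t%:Z * n%:Z)).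
  elim=> [|t IH].
    by move=> x; rewrite !mul0r subr0; apply: HM.
  move=> z Hz.
  have := (Hp (t%:Z * n%:Z) z).2.
  rewrite (_ : t%:Z * n%:Z + n%:Z = t.+1%:Z * n%:Z); last by rewrite intS; ring.
  apply; apply: IH => k Hk; rewrite /epsv; apply: Hz.
  move: Hk; rewrite intS mulrDl mul1r; lia.
exists ((absz (M - N))%:Z * n%:Z) => x Hx; apply: key.
apply: (tail_mono _ Hx).
have : (1 <= d%:Z) by rewrite lez_nat.
nia.
Qed.

Lemma chain_bounds L i : is_chain n d L ->
  exists M, sub (tail M) (L i) /\ sub (L i) (tail (- M)).
Proof. by case=> H _; case: (H i) => _ [_ [M [H1 H2]]]; exists M. Qed.

Lemma relpos0 L (L' : chain F) (X : zmat) r s : is_chain n d L -> is_chain n d L' ->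
  relpos L L' X -> sub (L r) (L' (s - 1)) -> X r s = 0%N.
Proof.
move=> CL CL' HR H.
have SY : is_subspace (addS (capS (L (r - 1)) (L' s)) (capS (L r) (L' (s - 1)))).
  by apply: add_sp; apply: cap_sp; apply: chain_sp.
apply: (qdim_unique SY (HR r s)); apply: qdim0 => // x [Hx1 Hx2].
exists (fun _ => 0), x; split; first exact: sp0 (cap_sp (chain_sp _ CL) (chain_sp _ CL')).
by split; [split => //; apply: H | move=> k; rewrite add0r].
Qed.


Definition possum (X : zmat) (i : int) (W : nat) : int :=
  \sum_(r <- win W) \sum_(s <- win W)
     (if (r <= i) && (i < s) then (X r s)%:Z else 0).

Lemma seqv_refl X : seqv X X.
Proof. by []. Qed.
Lemma seqv_trans X Y Z : seqv X Y -> seqv Y Z -> seqv X Z.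
Proof. by move=> H1 H2 x; rewrite H1 H2. Qed.
Lemma seqv_sym X Y : seqv X Y -> seqv Y X.
Proof. by move=> H x; rewrite H. Qed.

Lemma posdim (L L' : chain F) (X : zmat) i : is_chain n d L -> is_chain n d L' ->
  relpos L L' X ->
  exists a W0, qdim (L i) (capS (L i) (L' i)) a /\
               forall W, (W0 <= W)%N -> possum X i W = a%:Z.
Proof.
move=> CL CL' HR.
have [M' [HM' _]] := chain_bounds i CL'.
have [r Hr] := chain_shrink M' CL.
set R := r - (absz (r - i))%:Z - 1.
have RL : sub (L R) (L' i).
  by move=> x Hx; apply: HM'; apply: Hr; apply: (chain_mono CL _ Hx); rewrite /R; lia.
have [M [_ HM]] := chain_bounds i CL.
have [s0 Hs0] := chain_grow (- M) CL'.
set S := s0 + (absz (s0 - i))%:Z + 1.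
have LS : sub (L i) (L' S).
  by move=> x Hx; apply: (chain_mono CL' _ (Hs0 _ (HM _ Hx))); rewrite /S; lia.
have hRi : R < i by rewrite /R; lia.
have hiS : i < S by rewrite /S; lia.
set Nr := absz (i - R). set Ns := absz (S - i).
pose Fs s := capS (L i) (L' s).
have SF : forall s, is_subspace (Fs s) by move=> s; apply: cap_sp; apply: chain_sp.
have SC : forall a b, is_subspace (capS (L a) (L' b)).
  by move=> a b; apply: cap_sp; apply: chain_sp.
have stepA : forall t : nat, (t < Ns)%N ->
    qdim (Fs (i + 1 + t%:Z)) (Fs (i + t%:Z))
         (\sum_(k < Nr) X (R + 1 + k%:Z)%R (i + 1 + t%:Z)%R).
  move=> t Ht; set s := i + 1 + t%:Z.
  pose G k := addS (capS (L (R + k%:Z)) (L' s)) (Fs (s - 1)).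
  have SG : forall k, is_subspace (G k) by move=> k; apply: add_sp.
  have MG : forall k, sub (G k) (G k.+1).
    move=> k; apply: addS_mono; apply: capS_mono => //.
    by apply: chain_mono => //; lia.
  have HFs : sub (capS (L i) (L' (s - 1))) (capS (L i) (L' s)).
    by apply: capS_mono => //; apply: chain_mono => //; lia.
  have Hstep : forall k, (k < Nr)%N -> qdim (G k.+1) (G k) (X (R + 1 + k%:Z)%R s).
    move=> k Hk.
    set r' := R + 1 + k%:Z.
    have Hr'i : r' <= i by rewrite /r'; move: Hk; rewrite /Nr; lia.
    have le1 : r' - 1 <= r' by lia.
    have le2 : s - 1 <= s by lia.
    have YX : sub (addS (capS (L (r' - 1)) (L' s)) (capS (L r') (L' (s - 1))))
                  (capS (L r') (L' s)).
      move=> x [y [z [[Hy1 Hy2] [[Hz1 Hz2] E]]]]; split.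
        by apply: sp_ext (spD (chain_sp _ CL) (chain_mono CL le1 Hy1) Hz1) _ => k0; rewrite E.
      by apply: sp_ext (spD (chain_sp _ CL') Hy2 (chain_mono CL' le2 Hz2)) _ => k0; rewrite E.
    have XZY : sub (capS (capS (L r') (L' s)) (Fs (s - 1)))
                   (addS (capS (L (r' - 1)) (L' s)) (capS (L r') (L' (s - 1)))).
      move=> x [[Hx1 Hx2] [Hx3 Hx4]]; exists (fun _ => 0), x; split.
        exact: sp0 (SC _ _).
      by split; [split | move=> k0; rewrite add0r].
    have := qdim_mod (SC r' s) (add_sp (SC _ _) (SC _ _)) (SF (s - 1)) YX XZY (HR r' s).
    apply: qdim_ext.
      by rewrite /G (_ : R + k.+1%:Z = r') //; rewrite /r'; lia.
    apply: seqv_trans (addS_absorb _ (SC _ _) (SF _) _) _.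
      by apply: capS_mono => //; apply: chain_mono.
    by rewrite /G (_ : R + k%:Z = r' - 1) //; rewrite /r'; lia.
  have := tele SG MG Hstep.
  apply: qdim_ext.
    rewrite /G (_ : R + Nr%:Z = i); last by rewrite /Nr; lia.
    by apply: addS_sub2 => //; apply: SC.
  rewrite /G addr0 (_ : s - 1 = i + t%:Z); last by rewrite /s; lia.
  apply: addS_sub; [apply: SC | apply: SF | ].
  move=> x [H1 H2]; split; first by apply: (chain_mono CL _ H1); lia.
  by apply: (chain_mono CL' _ (RL _ H1)); lia.
pose H t := Fs (i + t%:Z).
have SH : forall t, is_subspace (H t) by move=> t; exact: SF.
have MH : forall t, sub (H t) (H t.+1).
  by move=> t; apply: capS_mono => //; apply: (chain_mono CL'); lia.
have HstepB : forall t, (t < Ns)%N -> qdim (H t.+1) (H t)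
    (\sum_(k < Nr) X (R + 1 + k%:Z)%R (i + 1 + t%:Z)%R).
  by move=> t Ht; rewrite /H (_ : i + t.+1%:Z = i + 1 + t%:Z); [exact: stepA | lia].
have Hq := tele SH MH HstepB.
exists (\sum_(t < Ns) \sum_(k < Nr) X (R + 1 + k%:Z)%R (i + 1 + t%:Z)%R),
       (absz R + absz S)%N; split.
  apply: qdim_ext Hq.
    rewrite /H (_ : i + Ns%:Z = S); last by rewrite /Ns; lia.
    by move=> x; split; [case | move=> Hx; split => //; apply: LS].
  by rewrite /H addr0.
move=> W HW; rewrite /possum.
have inner : forall r0, r0 <= i ->
    \sum_(s1 <- win W) (if (r0 <= i) && (i < s1) then (X r0 s1)%:Z else 0) =
    \sum_(t < Ns) (X r0 (i + 1 + t%:Z))%:Z.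
  move=> r0 hr0.
  rewrite (@sum_win_restr _ _ _ _ (i + 1) Ns W); last 3 first.
  - move=> x /orP [] Hx.
      by rewrite (_ : (i < x) = false) ?andbF //; apply/negbTE; rewrite -leNgt; lia.
    case: ifP => // _; rewrite (@relpos0 L L' X r0 x) //.
    move=> y Hy; apply: (chain_mono CL' _ (LS _ (chain_mono CL hr0 Hy))).
    by move: Hx; rewrite /Ns; lia.
  - lia.
  - rewrite /Ns; lia.
  apply: eq_bigr => t _; rewrite hr0 /=.
  by rewrite (_ : i < i + 1 + t%:Z) //; lia.
rewrite (@sum_win_restr _ _ _ _ (R + 1) Nr W); last 3 first.
- move=> x /orP [] Hx.
    apply: big1 => s1 _; case: ifP => // /andP [h1 h2].
    rewrite (@relpos0 L L' X x s1) //.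
    move=> y Hy; apply: (chain_mono CL' _ (RL _ (chain_mono CL _ Hy))); lia.
  apply: big1 => s1 _; rewrite (_ : (x <= i) = false) //.
  by apply/negbTE; rewrite -ltNge; move: Hx; rewrite /Nr; lia.
- lia.
- rewrite /Nr; lia.
have -> : \sum_(k < Nr) \sum_(s1 <- win W)
     (if (R + 1 + k%:Z <= i) && (i < s1) then (X (R + 1 + k%:Z) s1)%:Z else 0) =
   \sum_(k < Nr) \sum_(t < Ns) (X (R + 1 + k%:Z) (i + 1 + t%:Z))%:Z.
  by apply: eq_bigr => k _; apply: inner; have := ltn_ord k; rewrite /Nr; lia.
rewrite exchange_big /= -[RHS]natz natr_sum; apply: eq_bigr => t _.
by rewrite natr_sum; apply: eq_bigr => k _; rewrite natz.
Qed.


Lemma relpos_tr (L L' : chain F) (X : zmat) :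
  relpos L L' X -> relpos L' L (fun r s => X s r).
Proof.
move=> H r s; have := H s r; apply: qdim_ext.
  by move=> x; split; case.
move=> x; split; move=> [y [z [[H1 H2] [[H3 H4] E]]]].
  by exists z, y; split; [split|split; [split|move=> k; rewrite E addrC]].
by exists z, y; split; [split|split; [split|move=> k; rewrite E addrC]].
Qed.

Lemma eps_geom (L L' : chain F) (X : zmat) i : is_chain n d L -> is_chain n d L' ->
  relpos L L' X ->
  exists a b, qdim (L i) (capS (L i) (L' i)) a /\ qdim (L' i) (capS (L' i) (L i)) b /\
              eps_rel X i (a%:Z - b%:Z).
Proof.
move=> CL CL' HR.
have [a [W1 [Ha HW1]]] := posdim i CL CL' HR.
have [b [W2 [Hb HW2]]] := posdim i CL' CL (relpos_tr HR).
exists a, b; split=> //; split=> //.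
exists (maxn W1 W2) => W HW.
rewrite -(HW1 W); last by apply: leq_trans HW; apply: leq_maxl.
rewrite -(HW2 W); last by apply: leq_trans HW; apply: leq_maxr.
rewrite /possum; under eq_bigr do rewrite sumrB.
rewrite sumrB; congr (_ - _).
rewrite [RHS]exchange_big; apply: eq_bigr => r _; apply: eq_bigr => s _.
by rewrite andbC.
Qed.

Lemma pair_diff (X Y T U : subsp F) m a b dX dY :
  is_subspace X -> is_subspace Y -> is_subspace T ->
  sub T X -> sub T Y -> sub X U -> sub Y U -> qdim U T m ->
  qdim X (capS X Y) a -> qdim Y (capS Y X) b -> qdim X T dX -> qdim Y T dY ->
  a%:Z - b%:Z = dX%:Z - dY%:Z.
Proof.
move=> SX SY ST TX TY XU YU HU Ha Hb HX HY.
have SXY : is_subspace (capS X Y) by apply: cap_sp.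
have SYX : is_subspace (capS Y X) by apply: cap_sp.
have [e He] : exists e, qdim (capS X Y) T e.
  by apply: (qdim_exists ST SXY _ _ HU) => [x Hx|x [Hx _]]; [split; [apply: TX|apply: TY] | apply: XU].
have He' : qdim (capS Y X) T e by apply: qdim_ext He => // x; split; case.
have E1 := qdim_unique ST (qdim_trans SXY ST (fun x Hx => conj (TX x Hx) (TY x Hx)) (fun x (Hx : _ /\ _) => proj1 Hx) Ha He) HX.
have E2 := qdim_unique ST (qdim_trans SYX ST (fun x Hx => conj (TY x Hx) (TX x Hx)) (fun x (Hx : _ /\ _) => proj1 Hx) Hb He') HY.
rewrite -E1 -E2; lia.
Qed.

Lemma eps_additive (L L' L'' : chain F) (A B C : zmat) i :
  is_chain n d L -> is_chain n d L' -> is_chain n d L'' ->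
  relpos L L' B -> relpos L' L'' A -> relpos L L'' C ->
  exists x y, eps_rel C i (x + y) /\ eps_rel A i x /\ eps_rel B i y.
Proof.
move=> CL CL' CL'' HB HA HC.
have [a1 [b1 [Ha1 [Hb1 EB]]]] := eps_geom i CL CL' HB.
have [a2 [b2 [Ha2 [Hb2 EA]]]] := eps_geom i CL' CL'' HA.
have [a3 [b3 [Ha3 [Hb3 EC]]]] := eps_geom i CL CL'' HC.
exists (a2%:Z - b2%:Z), (a1%:Z - b1%:Z); split => //.
have [M1 [T1 U1]] := chain_bounds i CL.
have [M2 [T2 U2]] := chain_bounds i CL'.
have [M3 [T3 U3]] := chain_bounds i CL''.
set M := ((absz M1 + absz M2 + absz M3)%N)%:Z.
have HT : forall (P : subsp F) M0, M0 <= M -> sub (tail M0) P -> sub (tail M) P.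
  by move=> P M0 le H x Hx; apply: H; apply: (tail_mono _ Hx).
have HU : forall (P : subsp F) M0, M0 <= M -> sub P (tail (- M0)) -> sub P (tail (- M)).
  by move=> P M0 le H x Hx; apply: (tail_mono _ (H _ Hx)); lia.
have h1 : M1 <= M by rewrite /M; lia.
have h2 : M2 <= M by rewrite /M; lia.
have h3 : M3 <= M by rewrite /M; lia.
have HUT := @qdim_tail F (- M) M ltac:(rewrite /M; lia).
have ST := @tail_sp F M.
have SP := chain_sp i CL. have SQ := chain_sp i CL'. have SR := chain_sp i CL''.
have [dP HdP] := qdim_exists ST SP (HT _ _ h1 T1) (HU _ _ h1 U1) HUT.
have [dQ HdQ] := qdim_exists ST SQ (HT _ _ h2 T2) (HU _ _ h2 U2) HUT.
have [dR HdR] := qdim_exists ST SR (HT _ _ h3 T3) (HU _ _ h3 U3) HUT.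
have E1 := pair_diff SP SQ ST (HT _ _ h1 T1) (HT _ _ h2 T2) (HU _ _ h1 U1) (HU _ _ h2 U2) HUT Ha1 Hb1 HdP HdQ.
have E2 := pair_diff SQ SR ST (HT _ _ h2 T2) (HT _ _ h3 T3) (HU _ _ h2 U2) (HU _ _ h3 U3) HUT Ha2 Hb2 HdQ HdR.
have E3 := pair_diff SP SR ST (HT _ _ h1 T1) (HT _ _ h3 T3) (HU _ _ h1 U1) (HU _ _ h3 U3) HUT Ha3 Hb3 HdP HdR.
have -> : a2%:Z - b2%:Z + (a1%:Z - b1%:Z) = a3%:Z - b3%:Z by lia.
exact: EC.
Qed.

End Chains.

Lemma mem_win (W : nat) (x : int) : (x \in win W) = (- W%:Z <= x) && (x <= W%:Z).
Proof.
apply/mapP/andP => [[a Ha ->]|[h1 h2]].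
  by move: Ha; rewrite mem_iota; lia.
exists (absz (x + W%:Z)); first by rewrite mem_iota; lia.
lia.
Qed.

Definition rows (n : nat) : seq int := [seq (a.+1)%:Z | a <- iota 0 n].

Lemma mem_rows n (i : int) : (i \in rows n) = (1 <= i) && (i <= n%:Z).
Proof.
apply/mapP/andP => [[a Ha ->]|[h1 h2]].
  by move: Ha; rewrite mem_iota; lia.
exists (absz (i - 1)); first by rewrite mem_iota; lia.
lia.
Qed.

Definition gin (W0 : nat) (g : int -> nat) (x : int) : nat :=
  if (- W0%:Z <= x) && (x <= W0%:Z) then g x else 0%N.
Definition gout (W0 : nat) (g : int -> nat) (x : int) : nat :=
  if (- W0%:Z <= x) && (x <= W0%:Z) then 0%N else g x.

Lemma split_win (g : int -> nat) (W0 W : nat) : (W0 <= W)%N ->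
  (\sum_(x <- win W) g x = \sum_(x <- win W0) g x + \sum_(x <- win W) gout W0 g x)%N.
Proof.
move=> le.
have -> : (\sum_(x <- win W) g x = \sum_(x <- win W) (gin W0 g x + gout W0 g x))%N.
  by apply: eq_bigr => x _; rewrite /gin /gout; case: ifP => _; rewrite ?addn0.
rewrite big_split /=; congr (_ + _)%N.
rewrite (@win_stable _ _ _ (gin W0 g) W0 W) //; last first.
  move=> x Hx; rewrite /gin; case: ifP => // H; move: Hx H; lia.
apply: eq_big_seq => x; rewrite mem_win /gin => ->; done.
Qed.

Lemma win_vanish (g : int -> nat) (W0 : nat) :
  (forall W, (W0 <= W)%N -> \sum_(x <- win W) g x = \sum_(x <- win W0) g x)%N ->
  forall x, g x <> 0%N -> (- W0%:Z <= x) && (x <= W0%:Z).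
Proof.
move=> H x Hx; apply/negPn/negP => Nx.
have le : (W0 <= absz x)%N by move: Nx; lia.
have := split_win g le; rewrite H // => /eqP; rewrite -{1}[X in X == _]addn0 eqn_add2l.
rewrite eq_sym sum_nat_seq_eq0 => /allP /(_ x).
rewrite mem_win /gout (negbTE Nx) => /(_ ltac:(lia)).
by move/eqP.
Qed.

Lemma per_ext n (A : zmat) : (forall i j : int, A (i + n%:Z) (j + n%:Z) = A i j) ->
  forall (t i j : int), A (i + n%:Z * t) (j + n%:Z * t) = A i j.
Proof.
move=> H.
have Hnat : forall (t : nat) i j, A (i + n%:Z * t%:Z) (j + n%:Z * t%:Z) = A i j.
  elim=> [|t IH] i j; first by rewrite mulr0 !addr0.
  by rewrite -(IH i j) -[RHS]H; congr A; rewrite intS; ring.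
move=> t i j; case: t => t; first exact: Hnat.
have := Hnat t.+1 (i + n%:Z * Negz t) (j + n%:Z * Negz t).
rewrite (_ : i + n%:Z * Negz t + n%:Z * t.+1%:Z = i); last by rewrite NegzE intS; ring.
rewrite (_ : j + n%:Z * Negz t + n%:Z * t.+1%:Z = j); last by rewrite NegzE intS; ring.
by move=> ->.
Qed.

Lemma inXi_support n d (A : zmat) : (0 < n)%N -> inXi n d A ->
  exists W0 : nat,
    (forall i j, (1 <= i) -> (i <= n%:Z) -> A i j <> 0%N -> (- W0%:Z <= j) && (j <= W0%:Z))
    /\ (\sum_(i <- rows n) \sum_(j <- win W0) A i j)%N = d.
Proof.
move=> hn [Hp [W0 HW]].
exists W0; split; last exact: HW.
move=> i j h1 h2 Hij.
pose g j := (\sum_(i <- rows n) A i j)%N.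
have Hg : forall W, (W0 <= W)%N -> (\sum_(x <- win W) g x = \sum_(x <- win W0) g x)%N.
  move=> W le; rewrite /g exchange_big HW // exchange_big HW //.
apply: (win_vanish Hg) => /eqP; rewrite /g sum_nat_seq_eq0 => /allP /(_ i).
by rewrite mem_rows h1 h2 => /(_ isT) /eqP.
Qed.

Lemma inXi_band n d (A : zmat) : (0 < n)%N -> inXi n d A ->
  exists D : nat, forall r s, A r s <> 0%N -> `|r - s| <= D%:Z.
Proof.
move=> hn HX; have [W0 [HS _]] := inXi_support hn HX.
exists (W0 + n)%N => r s Hrs.
have [Hp _] := HX.
have E := divz_eq (r - 1) n%:Z.
set q := ((r - 1) %/ n%:Z)%Z in E. set m := ((r - 1) %% n%:Z)%Z in E.
have m0 : 0 <= m by apply: modz_ge0; lia.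
have m1 : m < n%:Z by apply: ltz_pmod; lia.
have := per_ext Hp q (m + 1) (s - n%:Z * q).
rewrite (_ : m + 1 + n%:Z * q = r); last by lia.
rewrite (_ : s - n%:Z * q + n%:Z * q = s); last by lia.
move=> E2; rewrite E2 in Hrs.
have := HS (m + 1) (s - n%:Z * q) ltac:(lia) ltac:(lia) Hrs.
move=> H; rewrite -abszE; lia.
Qed.

Lemma inXi_zero n (A : zmat) : (0 < n)%N -> inXi n 0 A -> forall r s, A r s = 0%N.
Proof.
move=> hn HX r s; have [W0 [HS Hsum]] := inXi_support hn HX.
have [Hp _] := HX.
have E := divz_eq (r - 1) n%:Z.
set q := ((r - 1) %/ n%:Z)%Z in E. set m := ((r - 1) %% n%:Z)%Z in E.
have m0 : 0 <= m by apply: modz_ge0; lia.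
have m1 : m < n%:Z by apply: ltz_pmod; lia.
have := per_ext Hp q (m + 1) (s - n%:Z * q).
rewrite (_ : m + 1 + n%:Z * q = r); last by lia.
rewrite (_ : s - n%:Z * q + n%:Z * q = s); last by lia.
move=> ->; apply/eqP/negPn/negP => /eqP Hrs.
have H := HS (m + 1) (s - n%:Z * q) ltac:(lia) ltac:(lia) Hrs.
move/eqP: Hsum; rewrite sum_nat_seq_eq0 => /allP /(_ (m + 1)).
rewrite mem_rows => /(_ ltac:(lia)) /=; rewrite sum_nat_seq_eq0 => /allP /(_ (s - n%:Z * q)).
by rewrite mem_win => /(_ H) /eqP.
Qed.

Lemma eps_zero (A : zmat) i : (forall r s, A r s = 0%N) -> eps_rel A i 0.
Proof.
move=> H; exists 0%N => W _; apply: big1 => r _; apply: big1 => s _.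
by rewrite !H; case: ifP; case: ifP; rewrite ?subr0.
Qed.

Lemma dA_exists n d (A : zmat) : (0 < n)%N -> inXi n d A -> exists x, dA_rel n A x.
Proof.
move=> hn HX; have [D HD] := inXi_band hn HX.
set B := (n + 2 * D + 1)%N.
have hb : forall i k j l, i \in rows n ->
    (if ((k <= i)%R && (j < l)%R) then A i j * A k l else 0)%N <> 0%N ->
    [/\ (- B%:Z <= k) && (k <= B%:Z), (- B%:Z <= j) && (j <= B%:Z) & (- B%:Z <= l) && (l <= B%:Z)].
  move=> i k j l; rewrite mem_rows => /andP [h1 h2].
  case: ifP => // /andP [c1 c2] /eqP; rewrite muln_eq0 negb_or => /andP [/eqP n1 /eqP n2].
  have := HD _ _ n1; have := HD _ _ n2; rewrite -!abszE /B => b1 b2.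
  split; lia.
exists (\sum_(i <- rows n) \sum_(k <- win B) \sum_(j <- win B) \sum_(l <- win B)
          (if ((k <= i)%R && (j < l)%R) then A i j * A k l else 0))%N.
exists B => W hW; apply: eq_big_seq => i Hi.
rewrite (@win_stable _ _ _ _ B W); last 2 first.
- move=> k Hk; apply: big1 => j _; apply: big1 => l _.
  apply/eqP/negPn/negP => /eqP H; have [h _ _] := hb _ _ _ _ Hi H; move: h Hk; lia.
- exact: hW.
apply: eq_bigr => k _.
rewrite (@win_stable _ _ _ _ B W); last 2 first.
- move=> j Hj; apply: big1 => l _.
  apply/eqP/negPn/negP => /eqP H; have [_ h _] := hb _ _ _ _ Hi H; move: h Hj; lia.
- exact: hW.
apply: eq_bigr => j _.
rewrite (@win_stable _ _ _ _ B W) //.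
move=> l Hl; apply/eqP/negPn/negP => /eqP H; have [_ _ h] := hb _ _ _ _ Hi H; move: h Hl; lia.
Qed.

Section Coord.
Variable F : fieldType.

Definition cchain (h : int -> int) : chain F := fun i x => forall k, i < h k -> x k = 0.

Lemma cchain_sp h i : is_subspace (cchain h i).
Proof.
split; first by [].
split; first by move=> x y Hx Hy k Hk; rewrite Hx // Hy // addr0.
by move=> c x Hx k Hk; rewrite Hx // mulr0.
Qed.

Lemma relpos_coord (rho sigma : int -> int) i j N (f : 'I_N -> int) :
  injective f -> (forall k, (exists t, f t = k) <-> (rho k = i /\ sigma k = j)) ->
  qdim (capS (cchain rho i) (cchain sigma j))
       (addS (capS (cchain rho (i - 1)) (cchain sigma j))
             (capS (cchain rho i) (cchain sigma (j - 1)))) N.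
Proof.
move=> finj Hf.
have Hft : forall t, rho (f t) = i /\ sigma (f t) = j by move=> t; apply/Hf; exists t.
exists (fun t => unitv F (f t)); split.
  move=> t; split=> k Hk; rewrite /unitv; case: eqP => // E; subst k;
  have [h1 h2] := Hft t; lia.
split.
  move=> c [y [z [[Hy1 Hy2] [[Hz1 Hz2] E]]]] t.
  have := E (f t); rewrite lincomb_unit_in // => ->.
  have [h1 h2] := Hft t.
  by rewrite Hy1 ?Hz2 ?addr0 //; lia.
move=> x [Hx1 Hx2].
pose c t := x (f t).
pose x' := fun k => x k - lincomb c (fun t => unitv F (f t)) k.
have Hin : forall k, (exists t, f t = k) -> x' k = 0.
  by move=> k [t <-]; rewrite /x' lincomb_unit_in // subrr.
have Hout : forall k, ~ (exists t, f t = k) -> x' k = x k.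
  move=> k Hk; rewrite /x' lincomb_unit_out ?subr0 //.
  by move=> t; apply/eqP => E; apply: Hk; exists t.
exists c.
exists (fun k => if rho k < i then x' k else 0), (fun k => if rho k < i then 0 else x' k).
split; first split.
- by move=> k Hk; rewrite ifF //; apply/negbTE; rewrite -leNgt; lia.
- move=> k Hk; case: ifP => // _; rewrite Hout ?Hx2 //.
  by move=> /Hf [_ E]; lia.
split; first split.
- move=> k Hk; rewrite ifF; last by apply/negbTE; rewrite -leNgt; lia.
  by rewrite Hout ?Hx1 // => /Hf [E _]; lia.
- move=> k Hk; case: ifP => // Hr.
  have [Hk'|Hk'] := classic (exists t, f t = k); first by rewrite Hin.
  rewrite Hout //.
  have [Er|Nr] := eqVneq (rho k) i.
    have [Es|Ns] := eqVneq (sigma k) j; first by case: Hk'; apply/Hf.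
    by apply: Hx2; lia.
  by apply: Hx1; move: Hr Nr; rewrite ltNge; lia.
by move=> k; case: ifP => _; rewrite ?addr0 ?add0r.
Qed.

Variables n d : nat.
Hypothesis hn : (0 < n)%N.
Hypothesis hd : (0 < d)%N.

Definition hk (h0 : nat -> int) (k : int) : int :=
  h0 (absz (k %% d%:Z)%Z) - n%:Z * (k %/ d%:Z)%Z.

Lemma hk_shift h0 k (t : int) : hk h0 (k + t * d%:Z) = hk h0 k - n%:Z * t.
Proof.
rewrite /hk (addrC k) modzMDl divzMDl; last by lia.
ring.
Qed.

Lemma cchain_is_chain h0 (Bd : nat) :
  (forall a, (a < d)%N -> `|h0 a| <= Bd%:Z) -> is_chain n d (cchain (hk h0)).
Proof.
move=> Hb.
have dec : forall k, exists q a, k = q * d%:Z + a%:Z /\ (a < d)%N /\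
      hk h0 k = h0 a - n%:Z * q.
  move=> k; exists (k %/ d%:Z)%Z, (absz (k %% d%:Z)%Z).
  have m0 : 0 <= (k %% d%:Z)%Z by apply: modz_ge0; lia.
  have m1 : (k %% d%:Z)%Z < d%:Z by apply: ltz_pmod; lia.
  split; first by rewrite gez0_abs //; apply: divz_eq.
  split; first by lia.
  by [].
split.
  move=> i; split; first exact: cchain_sp.
  split.
    move=> x Hx k Hk; rewrite /epsv; apply: Hx.
    have E := hk_shift h0 k (-1); rewrite mulN1r mulrN1 opprK in E; rewrite E; lia.
  exists (((Bd + absz i)%N)%:Z * d%:Z + d%:Z); split.
    move=> x Hx k Hk; apply: Hx.
    have [q [a [Ek [ha Eh]]]] := dec k.
    have := Hb a ha; rewrite -abszE => hb.
    move: Hk; rewrite Eh Ek => Hk.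
    have hd' : 1 <= d%:Z by lia.
    have hn' : 1 <= n%:Z by lia.
    have ha' : a%:Z < d%:Z by lia.
    nia.
  move=> x Hx k Hk; apply: Hx.
  have [q [a [Ek [ha Eh]]]] := dec k.
  have := Hb a ha; rewrite -abszE => hb.
  move: Hk; rewrite Eh Ek => Hk.
  have hd' : 1 <= d%:Z by lia.
  have hn' : 1 <= n%:Z by lia.
  have ha' : a%:Z < d%:Z by lia.
  nia.
split.
  by move=> i x Hx k Hk; apply: Hx; lia.
move=> i x; split.
  move=> Hx k Hk; rewrite /epsv; apply: Hx.
  have E := hk_shift h0 k (-1); rewrite mulN1r mulrN1 opprK in E; rewrite E; lia.
move=> Hx k Hk; have := Hx (k + d%:Z).
rewrite /epsv addrK; apply.
have := hk_shift h0 k 1; rewrite mul1r mulr1 => ->; lia.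
Qed.

End Coord.

Lemma uniq_rows n : uniq (rows n).
Proof.
rewrite map_inj_uniq ?iota_uniq // => a b /eqP; rewrite eqz_nat eqSS => /eqP //.
Qed.

Lemma uniq_win W : uniq (win W).
Proof.
rewrite map_inj_uniq ?iota_uniq // => a b /addIr /eqP; rewrite eqz_nat => /eqP //.
Qed.

Section Real.
Variables n d : nat.
Hypothesis hn : (0 < n)%N.
Hypothesis hd : (0 < d)%N.
Variable C : zmat.
Hypothesis HC : inXi n d C.
Variable W0 : nat.
Hypothesis HS : forall i j, (1 <= i) -> (i <= n%:Z) -> C i j <> 0%N ->
   (- W0%:Z <= j) && (j <= W0%:Z).
Hypothesis Hsum : (\sum_(i <- rows n) \sum_(j <- win W0) C i j)%N = d.

Definition lab : seq (int * int) :=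
  flatten [seq flatten [seq nseq (C i j) (i, j) | j <- win W0] | i <- rows n].

Lemma count_lab (P : pred (int * int)) :
  count P lab = (\sum_(i <- rows n) \sum_(j <- win W0) (P (i, j) * C i j))%N.
Proof.
rewrite count_flatten sumnE !big_map; apply: eq_bigr => i _.
by rewrite count_flatten sumnE !big_map; apply: eq_bigr => j _; rewrite count_nseq.
Qed.

Lemma size_lab : size lab = d.
Proof.
rewrite -Hsum -(count_predT lab) count_lab; apply: eq_bigr => i _.
by apply: eq_bigr => j _; rewrite mul1n.
Qed.

Lemma mem_lab x : x \in lab -> (x.1 \in rows n) && (x.2 \in win W0).
Proof.
case/flattenP => s /mapP [i Hi ->] /flattenP [s' /mapP [j Hj ->]].
by rewrite mem_nseq => /andP [_ /eqP ->] /=; rewrite Hi Hj.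
Qed.

Lemma count_lab1 i0 j0 : i0 \in rows n -> count (pred1 (i0, j0)) lab = C i0 j0.
Proof.
move=> Hi0.
rewrite (@eq_count _ _ (fun x => x == (i0, j0))) // count_lab (bigD1_seq i0) //=; last exact: uniq_rows.
rewrite [X in (_ + X)%N]big1_seq ?addn0; last first.
  move=> i /andP [Hi _]; apply: big1 => j _.
  by rewrite xpair_eqE (negbTE Hi).
have [Hj0|Hj0] := boolP (j0 \in win W0).
  rewrite (bigD1_seq j0) //=; last exact: uniq_win.
  rewrite eqxx mul1n big1_seq ?addn0 //.
  by move=> j /andP [Hj _]; rewrite xpair_eqE eqxx (negbTE Hj).
rewrite big1_seq.
  apply/esym/eqP/negPn/negP => /eqP H.
  move: Hi0; rewrite mem_rows => /andP [h1 h2].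
  by move: Hj0; rewrite mem_win (HS h1 h2 H).
move=> j /andP [_ Hj]; rewrite xpair_eqE eqxx /=.
by case: eqP => [E|]; [subst; rewrite Hj in Hj0 | rewrite mul0n].
Qed.

Definition lam (a : nat) : int * int := nth (0, 0) lab a.
Definition rho0 a := (lam a).1.
Definition sig0 a := (lam a).2.

Lemma lam_mem a : (a < d)%N -> (rho0 a \in rows n) && (sig0 a \in win W0).
Proof. by move=> ha; apply: mem_lab; apply: mem_nth; rewrite size_lab. Qed.

Lemma map_lam : [seq lam a | a <- iota 0 d] = lab.
Proof. by have := mkseq_nth (0, 0) lab; rewrite size_lab. Qed.

Lemma hk_small h0 (a : nat) (q : int) : (a < d)%N ->
  hk n d h0 (a%:Z + q * d%:Z) = h0 a - n%:Z * q.
Proof.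
move=> ha; rewrite hk_shift //.
rewrite /hk modz_small ?divz_small; try lia.
by rewrite /= mulr0 subr0.
Qed.


Lemma realize_relpos (F : fieldType) :
  relpos (@cchain F (hk n d rho0)) (@cchain F (hk n d sig0)) C.
Proof.
move=> i j.
have [Hp _] := HC.
set i0 := ((i - 1) %% n%:Z)%Z + 1. set q0 := - ((i - 1) %/ n%:Z)%Z.
have E := divz_eq (i - 1) n%:Z.
have m0 : 0 <= ((i - 1) %% n%:Z)%Z by apply: modz_ge0; lia.
have m1 : ((i - 1) %% n%:Z)%Z < n%:Z by apply: ltz_pmod; lia.
have Ei : i = i0 - n%:Z * q0 by rewrite /i0 /q0; lia.
have hi0 : (1 <= i0) && (i0 <= n%:Z) by rewrite /i0; lia.
set K := [seq (a%:Z + q0 * d%:Z) | a <- [seq a <- iota 0 d | lam a == (i0, j + n%:Z * q0)]].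
have uK : uniq K.
  rewrite map_inj_uniq ?filter_uniq ?iota_uniq // => a b /addIr /eqP.
  by rewrite eqz_nat => /eqP.
have szK : size K = C i j.
  rewrite size_map size_filter.
  rewrite (@eq_count _ _ (preim lam (pred1 (i0, j + n%:Z * q0)))) // -count_map map_lam.
  rewrite count_lab1; last by rewrite mem_rows.
  have := per_ext Hp (- q0) i0 (j + n%:Z * q0).
  rewrite (_ : i0 + n%:Z * - q0 = i); last by lia.
  by rewrite (_ : j + n%:Z * q0 + n%:Z * - q0 = j) => [->|]; last ring.
have memK : forall k, k \in K <-> (hk n d rho0 k = i /\ hk n d sig0 k = j).
  move=> k; split.
    move=> /mapP [a]; rewrite mem_filter mem_iota => /andP [/eqP La /andP [_ Ha]] ->.
    rewrite !hk_small //; rewrite /rho0 /sig0 La /=; split; [lia | ring].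
  move=> [H1 H2].
  have Ek := divz_eq k d%:Z.
  set q := (k %/ d%:Z)%Z in Ek.
  have a0 : 0 <= (k %% d%:Z)%Z by apply: modz_ge0; lia.
  have a1 : (k %% d%:Z)%Z < d%:Z by apply: ltz_pmod; lia.
  set a := absz (k %% d%:Z)%Z.
  have Ek' : k = a%:Z + q * d%:Z by rewrite /a gez0_abs //; lia.
  have ha : (a < d)%N by rewrite /a; lia.
  rewrite Ek' !hk_small // in H1 H2.
  have := lam_mem ha; rewrite mem_rows => /andP [/andP [r1 r2] _].
  have hq : q = q0 by nia.
  apply/mapP; exists a; last by rewrite Ek' hq.
  rewrite mem_filter mem_iota ha andbT /=.
  rewrite /rho0 /sig0 in H1 H2 r1 r2.
  move: H1 H2 r1 r2; case: (lam a) => x y /= H1 H2 r1 r2.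
  rewrite xpair_eqE; apply/andP; split; apply/eqP; nia.
apply: (@relpos_coord F _ _ i j (C i j) (fun t : 'I_(C i j) => nth 0 K t)).
  move=> t1 t2 /eqP; rewrite nth_uniq ?szK // => /eqP /val_inj //.
move=> k; split.
  by move=> [t <-]; apply/memK; apply: mem_nth; rewrite szK.
move=> /memK Hk; have Hi : (index k K < C i j)%N by rewrite -szK index_mem.
by exists (Ordinal Hi); rewrite /= nth_index.
Qed.

End Real.

Lemma realize (F : fieldType) n d (C : zmat) : (0 < n)%N -> (0 < d)%N -> inXi n d C ->
  exists L L'' : chain F, is_chain n d L /\ is_chain n d L'' /\ relpos L L'' C.
Proof.
move=> hn hd HC; have [W0 [HS Hsum]] := inXi_support hn HC.
exists (@cchain F (hk n d (rho0 n C W0))), (@cchain F (hk n d (sig0 n C W0))).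
split; last split.
- apply: (@cchain_is_chain F n d hn hd _ (n + W0)%N) => a ha.
  have := lam_mem Hsum ha; rewrite mem_rows -abszE => /andP [? _]; lia.
- apply: (@cchain_is_chain F n d hn hd _ (n + W0)%N) => a ha.
  have := lam_mem Hsum ha; rewrite mem_win -abszE => /andP [_ ?]; lia.
exact: realize_relpos.
Qed.

Lemma many_primes k : exists s : seq nat, [/\ uniq s, all prime s & size s = k].
Proof.
elim: k => [|k [s [us ps ss]]]; first by exists [::].
have [P HP prP] := prime_above (\max_(x <- s) x).
exists (P :: s); split => //=; last 2 first.
- by rewrite prP.
- by rewrite ss.
rewrite us andbT; apply/negP => Ps.
have := @leq_bigmax_seq _ s xpredT (fun x => x) P Ps isT.
by rewrite leqNgt HP.
Qed.

Lemma good_prime (p : {poly int}) : p != 0 ->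
  exists P, prime P /\
    (map_poly (fun c : int => c%:~R) p : {poly algC}).[sqrtC P%:R] != 0.
Proof.
move=> p0.
set pc := map_poly _ p.
have spc : size pc = size p.
  apply: size_map_poly_id0; rewrite intr_eq0 lead_coef_eq0 //.
have pc0 : pc != 0 by rewrite -size_poly_eq0 spc size_poly_eq0.
have [s [us ps ss]] := many_primes (size p).
set rs := [seq sqrtC (P%:R : algC) | P <- s].
have urs : uniq rs.
  rewrite map_inj_in_uniq // => a b _ _ E.
  have := congr1 (fun x => x ^+ 2) E; rewrite /= !sqrtCK => /eqP.
  by rewrite eqr_nat => /eqP.
have [/allP Hall|] := boolP (all (root pc) rs).
  have := max_poly_roots pc0 (introT allP Hall) urs.
  by rewrite size_map ss spc ltnn.
case/allPn => x /mapP [P Ps ->] Nr; exists P; split; first exact: (allP ps).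
exact: Nr.
Qed.

Unset Implicit Arguments.
Theorem mainTheorem5 (n d : nat) (hn : (0 < n)%N) (A B C : zmat)
  (HA : inXi n d A) (HB : inXi n d B) (HC : inXi n d C)
  (alpha beta : nat -> nat)
  (HBform : (forall r s, B r s = Bupper n alpha beta r s) \/
            (forall r s, B r s = Blower n alpha beta r s))
  (p : {poly int}) (k : nat)
  (HQ : is_schur_coeff n d B A C p k) (Hnz : p != 0) :
  forall i : int, exists x y : int,
    eps_rel C i (x + y) /\ eps_rel A i x /\ eps_rel B i y.
Proof.
move=> i.
have [d0|hd] := posnP d.
  rewrite d0 in HA HB HC; exists 0, 0; rewrite addr0.
  split; [apply: eps_zero; exact: (inXi_zero hn HC) | split; apply: eps_zero; [exact: (inXi_zero hn HA) | exact: (inXi_zero hn HB)]].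
have [P [prP HP]] := good_prime Hnz.
pose F : finFieldType := 'F_P.
have [L [L'' [CL [CL'' HR]]]] := realize F hn hd HC.
have [m [[f [Hf _]] Heq]] := HQ F L L'' CL CL'' HR.
have [dA HdA] := dA_exists hn HA.
have [dB HdB] := dA_exists hn HB.
have [dC HdC] := dA_exists hn HC.
have := Heq dA dB dC HdA HdB HdC.
clear Heq; case: m f Hf => [|m] f Hf.
  rewrite mulr0 /laurent_eval card_Fp // => /eqP; rewrite mulf_eq0 invr_eq0 (negbTE HP) /=.
  rewrite expf_eq0 sqrtC_eq0 pnatr_eq0 => /andP [_ /eqP P0]; by rewrite P0 in prP.
move=> _; have [CL' [HB' HA']] := Hf ord0.
exact: (eps_additive hn hd i CL CL' CL'' HB' HA' HR).
Qed.
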